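(* Let $A$ be a random variable with values in $\{u,v\}$, $\mathbb{P}(A=u)=p_u$, $\mathbb{P}(A=v)=p_v$, $p_u+p_v=1$, and let $(U,V)$ be a random vector independent of $A$ that is bivariate normal with $\mathbb{E}[U]=\mathbb{E}[V]=\mu<0$, $\operatorname{Var}(U)=\operatorname{Var}(V)=\sigma^2$ with $\sigma>0$, and correlation $\rho$. For $z\in\mathbb{R}$ define \[f(z)=\mathbb{P}(A=u)\,\mathbb{P}(U>z)\,\mathbb{E}[U+V\mid U>z]+\mathbb{P}(A=v)\,\mathbb{P}(V>z)\,\mathbb{E}[U+V\mid V>z]\] (equivalently $f(z)=\mathbb{E}[D(U+V)]$ with $D=\mathbb{I}(A=u,U>z)+\mathbb{I}(A=v,V>z)$). If $\rho\in(-1,1)$, then $f'(0)>0$, $f$ attains its maximum at \[z^*=\frac{\rho-1}{\rho+1}\,\mu,\] and $f(z^* )>0$.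
   Context: $z$ is a hurdle rate: an innovation is adopted iff its effect on the primary dimension $A$ exceeds $z$. $f(z)$ is the long-run average overall performance of the firm under this rule. *)

(* Defs.v *)
From Stdlib Require Import Reals Lra.
From Coquelicot Require Import Coquelicot.
Open Scope R_scope.

Definition binorm_density (mu sigma rho x y : R) : R :=
  / (2 * PI * sigma ^ 2 * sqrt (1 - rho ^ 2)) *
  exp (- ((x - mu) ^ 2 - 2 * rho * (x - mu) * (y - mu) + (y - mu) ^ 2)
        / (2 * sigma ^ 2 * (1 - rho ^ 2))).

(* E[(U+V) 1{U > z}] = P(U>z) E[U+V | U>z] : integrate x = U over (z,+oo),
   y = V over R. *)
Definition E_sum_U_gt (mu sigma rho z : R) : R :=
  RInt_gen
    (fun x => RInt_gen (fun y => (x + y) * binorm_density mu sigma rho x y)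
                       (Rbar_locally m_infty) (Rbar_locally p_infty))
    (at_point z) (Rbar_locally p_infty).

(* E[(U+V) 1{V > z}] = P(V>z) E[U+V | V>z] : integrate y = V over (z,+oo),
   x = U over R. *)
Definition E_sum_V_gt (mu sigma rho z : R) : R :=
  RInt_gen
    (fun y => RInt_gen (fun x => (x + y) * binorm_density mu sigma rho x y)
                       (Rbar_locally m_infty) (Rbar_locally p_infty))
    (at_point z) (Rbar_locally p_infty).

Definition perf (pu pv mu sigma rho z : R) : R :=
  pu * E_sum_U_gt mu sigma rho z + pv * E_sum_V_gt mu sigma rho z.

(* Main.v *)
Require Import Defs.
From Stdlib Require Import Reals Lra FunctionalExtensionality.
From Coquelicot Require Import Coquelicot.
Open Scope R_scope.

Lemma exp_le_mono x y : x <= y -> exp x <= exp y.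
Proof. intros [H|H]. left; now apply exp_increasing. subst; lra. Qed.

Lemma mono_lim_p (F : R -> R) M :
  (forall x y, x <= y -> F x <= F y) -> (forall x, F x <= M) ->
  exists l, filterlim F (Rbar_locally p_infty) (locally l) /\ forall x, F x <= l.
Proof.
  intros Hm HM.
  destruct (completeness (fun v => exists x, v = F x)) as [l [Hub Hl]].
  - exists M. intros v [x ->]. apply HM.
  - exists (F 0). now exists 0.
  - exists l. split.
    + intros P [eps HP].
      assert (exists x0, l - eps < F x0) as [x0 Hx0].
      { apply Classical_Prop.NNPP. intros Hn.
        assert (l <= l - eps). { apply Hl. intros v [x ->].
          apply Rnot_lt_le. intros Hc. apply Hn. now exists x. }
        destruct eps; simpl in *; lra. }
      exists x0. intros y Hy. apply HP.
      change (Rabs (F y - l) < eps).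
      assert (F y <= l) by (apply Hub; now exists y).
      assert (F x0 <= F y) by (apply Hm; lra).
      apply Rabs_def1; lra.
    + intros x. apply Hub. now exists x.
Qed.

Lemma mono_lim_m (F : R -> R) M :
  (forall x y, x <= y -> F x <= F y) -> (forall x, M <= F x) ->
  exists l, filterlim F (Rbar_locally m_infty) (locally l) /\ forall x, l <= F x.
Proof.
  intros Hm HM.
  destruct (completeness (fun v => exists x, v = - F x)) as [l [Hub Hl]].
  - exists (-M). intros v [x ->]. specialize (HM x). lra.
  - exists (- F 0). now exists 0.
  - exists (-l). split.
    + intros P [eps HP].
      assert (exists x0, l - eps < - F x0) as [x0 Hx0].
      { apply Classical_Prop.NNPP. intros Hn.
        assert (l <= l - eps). { apply Hl. intros v [x ->].
          apply Rnot_lt_le. intros Hc. apply Hn. now exists x. }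
        destruct eps; simpl in *; lra. }
      exists x0. intros y Hy. apply HP.
      change (Rabs (F y - - l) < eps).
      assert (- F y <= l) by (apply Hub; now exists y).
      assert (F y <= F x0) by (apply Hm; lra).
      apply Rabs_def1; lra.
    + intros x. assert (- F x <= l) by (apply Hub; now exists x). lra.
Qed.

Lemma shift_p m : filterlim (fun y => y - m) (Rbar_locally p_infty) (Rbar_locally p_infty).
Proof. intros P [M HP]. exists (M + m). intros y Hy. apply HP. lra. Qed.
Lemma shift_m m : filterlim (fun y => y - m) (Rbar_locally m_infty) (Rbar_locally m_infty).
Proof. intros P [M HP]. exists (M + m). intros y Hy. apply HP. lra. Qed.

Lemma at_point_lim (P : R -> R) z : filterlim P (at_point z) (locally (P z)).
Proof. intros Q HQ. apply locally_singleton in HQ. exact HQ. Qed.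

Lemma RIg_deriv Fa Fb {FA : Filter Fa} {FB : Filter Fb} (P h : R -> R) la lb :
  (forall x, is_derive P x (h x)) -> (forall x, continuous h x) ->
  filterlim P Fa (locally la) -> filterlim P Fb (locally lb) ->
  is_RInt_gen h Fa Fb (lb - la).
Proof.
  intros Hd Hc Ha Hb.
  assert (HD : forall x, Derive P x = h x) by (intros; now apply is_derive_unique).
  apply is_RInt_gen_ext with (Derive P).
  - apply filter_forall. intros ab x _. apply HD.
  - apply is_RInt_gen_Derive; auto.
    + apply filter_forall. intros ab x _. eexists; apply Hd.
    + apply filter_forall. intros ab x _. rewrite (functional_extensionality _ _ HD). apply Hc.
Qed.

Lemma exp_sq_small D m eps : 0 < D -> 0 < eps -> forall y, D / eps + 1 < Rabs (y - m) ->
  Rabs (exp (- (y - m) ^ 2 / D) - 0) < eps.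
Proof.
  intros HD He y Hy.
  set (u := Rabs (y - m)) in *.
  assert (Hu2 : (y - m) ^ 2 = u * u) by (unfold u; rewrite <- Rabs_mult; rewrite Rabs_right; [ring|apply Rle_ge; apply Rle_0_sqr]).
  assert (Hpos : 0 <= D / eps) by (apply Rlt_le, Rdiv_lt_0_compat; lra).
  set (v := (y - m) ^ 2 / D).
  assert (Hv : 1 / eps < v).
  { unfold v. rewrite Hu2. apply Rmult_lt_reg_r with D; auto.
    replace (u * u / D * D) with (u * u) by (field; lra).
    replace (1 / eps * D) with (D / eps) by (field; lra).
    assert (1 <= u) by lra. nra. }
  assert (0 < v) by (assert (0 < 1/eps) by (apply Rdiv_lt_0_compat; lra); lra).
  rewrite Rminus_0_r, Rabs_right by (left; apply exp_pos).
  replace (- (y - m) ^ 2 / D) with (- v) by (unfold v, Rdiv; ring).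
  rewrite exp_Ropp.
  assert (1 + v < exp v) by (apply exp_ineq1; lra).
  apply Rmult_lt_reg_l with (exp v). apply exp_pos.
  rewrite Rinv_r by (apply Rgt_not_eq, exp_pos).
  assert (1 < v * eps).
  { apply Rmult_lt_reg_r with (/eps). apply Rinv_0_lt_compat; lra.
    rewrite Rmult_assoc, Rinv_r, Rmult_1_r, Rmult_1_l by lra. unfold Rdiv in Hv. lra. }
  nra.
Qed.

Lemma exp_sq_lim_p D m : 0 < D ->
  filterlim (fun y => exp (- (y - m) ^ 2 / D)) (Rbar_locally p_infty) (locally 0).
Proof.
  intros HD P [eps HP]. exists (D / eps + 1 + Rabs m). intros y Hy. apply HP.
  apply exp_sq_small; auto. apply cond_pos.
  pose proof (Rle_abs (y - m)). pose proof (Rle_abs m). lra.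
Qed.

Lemma exp_sq_lim_m D m : 0 < D ->
  filterlim (fun y => exp (- (y - m) ^ 2 / D)) (Rbar_locally m_infty) (locally 0).
Proof.
  intros HD P [eps HP]. exists (- (D / eps + 1 + Rabs m)). intros y Hy. apply HP.
  apply exp_sq_small; auto. apply cond_pos.
  pose proof (Rle_abs (-(y - m))). rewrite Rabs_Ropp in H. pose proof (Rle_abs (-m)). rewrite Rabs_Ropp in H0. lra.
Qed.

Definition gau D t := exp (- t ^ 2 / D).
Definition Phi D Y := RInt (gau D) 0 Y.

Lemma gau_cont D x : continuous (gau D) x.
Proof. apply (@ex_derive_continuous R_AbsRing R_NormedModule). unfold gau. auto_derive. auto. Qed.

Lemma gau_ex D a b : ex_RInt (gau D) a b.
Proof. apply (@ex_RInt_continuous R_CompleteNormedModule). intros; apply gau_cont. Qed.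

Lemma Phi_deriv D x : is_derive (Phi D) x (gau D x).
Proof.
  apply is_derive_RInt with 0. apply filter_forall. intros b. apply RInt_correct, gau_ex.
  apply gau_cont.
Qed.

Lemma Phi_chasles D x y : Phi D y = Phi D x + RInt (gau D) x y.
Proof. unfold Phi. rewrite <- (RInt_Chasles _ 0 x y) by apply gau_ex. reflexivity. Qed.

Lemma RInt_gau_ge0 D a b : a <= b -> 0 <= RInt (gau D) a b.
Proof. intros. apply RInt_ge_0; auto. apply gau_ex. intros; left; apply exp_pos. Qed.

Lemma Phi_mono D x y : x <= y -> Phi D x <= Phi D y.
Proof. intros. rewrite (Phi_chasles D x y). pose proof (RInt_gau_ge0 D x y H). lra. Qed.

Lemma RInt_exp_lin D c a b : 0 < D ->
  RInt (fun t => exp ((1 + c * t) / D)) a b = D / c * exp ((1 + c * b) / D) - D / c * exp ((1 + c * a) / D) \/ c = 0.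
Proof.
  intros HD. destruct (Req_dec c 0) as [->|Hc]; [now right|left].
  apply is_RInt_unique.
  match goal with |- is_RInt _ _ _ ?v => replace v with (minus (D / c * exp ((1 + c * b) / D)) (D / c * exp ((1 + c * a) / D))) by reflexivity end.
  apply (is_RInt_derive (fun t => D / c * exp ((1 + c * t) / D))).
  - intros x _. auto_derive; auto. unfold Rdiv. field. lra.
  - intros x _. apply (@ex_derive_continuous R_AbsRing R_NormedModule). auto_derive. auto.
Qed.

Lemma Phi_ub D Y : 0 < D -> Phi D Y <= D / 2 * exp (1 / D).
Proof.
  intros HD. assert (0 < D / 2 * exp (1 / D)) by (apply Rmult_lt_0_compat; [lra|apply exp_pos]).
  destruct (Rle_lt_dec Y 0) as [HY|HY].
  - unfold Phi. rewrite <- opp_RInt_swap by apply gau_ex.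
    pose proof (RInt_gau_ge0 D Y 0 HY). change (- RInt (gau D) Y 0 <= D / 2 * exp (1 / D)). lra.
  - unfold Phi. eapply Rle_trans.
    apply (RInt_le _ (fun t => exp ((1 + (-2) * t) / D))). lra. apply gau_ex.
    apply (@ex_RInt_continuous R_CompleteNormedModule); intros; apply (@ex_derive_continuous R_AbsRing R_NormedModule); auto_derive; auto.
    intros x _. unfold gau. apply exp_le_mono. apply Rmult_le_compat_r. left; now apply Rinv_0_lt_compat.
    pose proof (pow2_ge_0 (x - 1)); pose proof (pow2_ge_0 (x + 1)); simpl in *; nra.
    destruct (RInt_exp_lin D (-2) 0 Y HD) as [->|]; [|lra].
    replace (1 + -2 * 0) with 1 by ring.
    pose proof (exp_pos ((1 + -2 * Y) / D)).
    replace (D / -2) with (- (D/2)) by field.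
    assert (0 < D / 2 * exp ((1 + -2 * Y) / D)) by (apply Rmult_lt_0_compat; lra). lra.
Qed.

Lemma Phi_lb D Y : 0 < D -> - (D / 2 * exp (1 / D)) <= Phi D Y.
Proof.
  intros HD. assert (0 < D / 2 * exp (1 / D)) by (apply Rmult_lt_0_compat; [lra|apply exp_pos]).
  destruct (Rle_lt_dec 0 Y) as [HY|HY].
  - unfold Phi. pose proof (RInt_gau_ge0 D 0 Y HY). lra.
  - unfold Phi. rewrite <- opp_RInt_swap by apply gau_ex. change (- (D / 2 * exp (1 / D)) <= - RInt (gau D) Y 0).
    apply Ropp_le_contravar. eapply Rle_trans.
    apply (RInt_le _ (fun t => exp ((1 + 2 * t) / D))). lra. apply gau_ex.
    apply (@ex_RInt_continuous R_CompleteNormedModule); intros; apply (@ex_derive_continuous R_AbsRing R_NormedModule); auto_derive; auto.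
    intros x _. unfold gau. apply exp_le_mono. apply Rmult_le_compat_r. left; now apply Rinv_0_lt_compat.
    pose proof (pow2_ge_0 (x - 1)); pose proof (pow2_ge_0 (x + 1)); simpl in *; nra.
    destruct (RInt_exp_lin D 2 Y 0 HD) as [->|]; [|lra].
    replace (1 + 2 * 0) with 1 by ring.
    pose proof (exp_pos ((1 + 2 * Y) / D)).
    assert (0 < D / 2 * exp ((1 + 2 * Y) / D)) by (apply Rmult_lt_0_compat; lra). lra.
Qed.

Lemma gauss D : 0 < D -> exists Lp Lm,
  filterlim (Phi D) (Rbar_locally p_infty) (locally Lp) /\
  filterlim (Phi D) (Rbar_locally m_infty) (locally Lm) /\ Lm < Lp.
Proof.
  intros HD.
  destruct (mono_lim_p (Phi D) _ (Phi_mono D) (fun Y => Phi_ub D Y HD)) as [Lp [H1 H2]].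
  destruct (mono_lim_m (Phi D) _ (Phi_mono D) (fun Y => Phi_lb D Y HD)) as [Lm [H3 H4]].
  exists Lp, Lm. split; [|split]; auto.
  specialize (H2 1). specialize (H4 0).
  assert (Phi D 0 = 0) by (unfold Phi; rewrite RInt_point; reflexivity).
  assert (0 < Phi D 1).
  { unfold Phi. replace 0 with (RInt (fun _ => 0) 0 1) at 1.
    apply RInt_lt. lra. intros; apply gau_cont. intros; apply continuous_const.
    intros; apply exp_pos.
    rewrite RInt_const. apply Rmult_0_r. }
  lra.
Qed.

Lemma lim_plus F {FF : Filter F} (f g : R -> R) a b :
  filterlim f F (locally a) -> filterlim g F (locally b) ->
  filterlim (fun y => f y + g y) F (locally (a + b)).
Proof. intros Ha Hb. exact (filterlim_comp_2 f g plus Ha Hb (@filterlim_plus R_AbsRing R_NormedModule a b)). Qed.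

Lemma lim_mult F {FF : Filter F} (f g : R -> R) a b :
  filterlim f F (locally a) -> filterlim g F (locally b) ->
  filterlim (fun y => f y * g y) F (locally (a * b)).
Proof. intros Ha Hb. exact (filterlim_comp_2 f g mult Ha Hb (@filterlim_mult R_AbsRing a b)). Qed.

Lemma lim_cmul F {FF : Filter F} (f : R -> R) c a :
  filterlim f F (locally a) -> filterlim (fun y => c * f y) F (locally (c * a)).
Proof. intros Ha. apply lim_mult; auto. apply filterlim_const. Qed.

Definition mm mu rho x := mu + rho * (x - mu).
Definition DD sigma rho := 2 * sigma ^ 2 * (1 - rho ^ 2).
Definition Cst sigma rho := / (2 * PI * sigma ^ 2 * sqrt (1 - rho ^ 2)).
Definition EE mu sigma x := exp (- (x - mu) ^ 2 / (2 * sigma ^ 2)).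

Lemma DD_pos sigma rho : 0 < sigma -> -1 < rho < 1 -> 0 < DD sigma rho.
Proof. intros. unfold DD. assert (0 < 1 - rho^2) by nra. assert (0 < sigma^2) by nra. nra. Qed.

Lemma dens_split mu sigma rho x y : 0 < sigma -> -1 < rho < 1 ->
  binorm_density mu sigma rho x y = Cst sigma rho * EE mu sigma x * exp (- (y - mm mu rho x) ^ 2 / DD sigma rho).
Proof.
  intros Hs Hr. rewrite (Rmult_assoc (Cst sigma rho)). unfold binorm_density, Cst, EE, mm, DD.
  rewrite <- exp_plus. f_equal. f_equal.
  assert (0 < 1 - rho^2) by nra. field. split; lra.
Qed.

Lemma inner mu sigma rho Lp Lm x : 0 < sigma -> -1 < rho < 1 ->
  filterlim (Phi (DD sigma rho)) (Rbar_locally p_infty) (locally Lp) ->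
  filterlim (Phi (DD sigma rho)) (Rbar_locally m_infty) (locally Lm) ->
  is_RInt_gen (fun y => (x + y) * binorm_density mu sigma rho x y)
    (Rbar_locally m_infty) (Rbar_locally p_infty)
    (Cst sigma rho * EE mu sigma x * (x + mm mu rho x) * (Lp - Lm)).
Proof.
  intros Hs Hr HLp HLm.
  pose proof (DD_pos sigma rho Hs Hr) as HD.
  set (D := DD sigma rho) in *. set (m := mm mu rho x). set (K := Cst sigma rho * EE mu sigma x).
  set (P := fun y => K * ((x + m) * Phi D (y - m) + (- D / 2) * exp (- (y - m) ^ 2 / D))).
  replace (K * (x + m) * (Lp - Lm)) with
    (K * ((x + m) * Lp + (- D / 2) * 0) - K * ((x + m) * Lm + (- D / 2) * 0)) by ring.
  apply (RIg_deriv _ _ P).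
  - intros y. unfold P.
    apply is_derive_ext with (fun y => K * ((x + m) * Phi D (y - m) + (- D / 2) * exp (- (y - m) ^ 2 / D))).
    { reflexivity. }
    pose proof (Phi_deriv D (y - m)) as HP.
    auto_derive.
    + exists (gau D (y - m)). exact HP.
    + replace (Derive (fun x : R => Phi D x) (y + - m)) with (gau D (y - m))
        by (symmetry; apply is_derive_unique; exact HP).
      replace (- ((y + - m) * ((y + - m) * 1)) * / D) with (- (y - m) ^ 2 / D) by (unfold Rdiv; ring).
      unfold gau. rewrite dens_split by auto. fold D m. unfold K. field. lra.
  - intros y. apply (@ex_derive_continuous R_AbsRing R_NormedModule).
    unfold binorm_density. auto_derive. auto.
  - unfold P. apply (lim_cmul _ (fun y => _ + _)). apply (lim_plus _ (fun y => _ * _) (fun y => _ * _)); apply (lim_cmul _ (fun y => _)).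
    + eapply filterlim_comp; [apply (shift_m m) | exact HLm].
    + now apply exp_sq_lim_m.
  - unfold P. apply (lim_cmul _ (fun y => _ + _)). apply (lim_plus _ (fun y => _ * _) (fun y => _ * _)); apply (lim_cmul _ (fun y => _)).
    + eapply filterlim_comp; [apply (shift_p m) | exact HLp].
    + now apply exp_sq_lim_p.
Qed.

Definition gg mu sigma rho I0 x := Cst sigma rho * EE mu sigma x * (x + mm mu rho x) * I0.
Definition QQ mu sigma rho I0 x :=
  Cst sigma rho * I0 * ((1 + rho) * (- sigma ^ 2) * EE mu sigma x + 2 * mu * Phi (2 * sigma ^ 2) (x - mu)).

Lemma gg_cont mu sigma rho I0 x : continuous (gg mu sigma rho I0) x.
Proof. apply (@ex_derive_continuous R_AbsRing R_NormedModule). unfold gg, EE, mm. auto_derive. auto. Qed.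

Lemma QQ_deriv mu sigma rho I0 x : 0 < sigma -> is_derive (QQ mu sigma rho I0) x (gg mu sigma rho I0 x).
Proof.
  intros Hs. unfold QQ.
  pose proof (Phi_deriv (2 * sigma ^ 2) (x - mu)) as HP.
  apply is_derive_ext with (fun x => Cst sigma rho * I0 * ((1 + rho) * (- sigma ^ 2) * EE mu sigma x + 2 * mu * Phi (2 * sigma ^ 2) (x - mu))); [reflexivity|].
  unfold EE. auto_derive.
  - exists (gau (2 * sigma ^ 2) (x - mu)). exact HP.
  - match goal with |- context [Derive ?f ?p] => replace (Derive f p) with (gau (2 * sigma ^ 2) (x - mu))
        by (symmetry; apply is_derive_unique; exact HP) end.
    unfold gg, EE, gau, mm.
    set (e := exp (- (x - mu) ^ 2 / (2 * sigma ^ 2))).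
    replace (exp (- ((x + - mu) * ((x + - mu) * 1)) * / (2 * (sigma * (sigma * 1))))) with e
      by (unfold e; f_equal; unfold Rdiv; ring).
    field. lra.
Qed.

Lemma dens_sym mu sigma rho x y : binorm_density mu sigma rho x y = binorm_density mu sigma rho y x.
Proof.
  unfold binorm_density.
  replace ((x - mu) ^ 2 - 2 * rho * (x - mu) * (y - mu) + (y - mu) ^ 2) with
    ((y - mu) ^ 2 - 2 * rho * (y - mu) * (x - mu) + (x - mu) ^ 2) by ring. reflexivity.
Qed.

Lemma QQ_lim mu sigma rho I0 L2 : 0 < sigma ->
  filterlim (Phi (2 * sigma ^ 2)) (Rbar_locally p_infty) (locally L2) ->
  filterlim (QQ mu sigma rho I0) (Rbar_locally p_infty)
    (locally (Cst sigma rho * I0 * ((1 + rho) * (- sigma ^ 2) * 0 + 2 * mu * L2))).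
Proof.
  intros Hs HL. unfold QQ.
  apply (lim_cmul _ (fun y => _ + _)). apply (lim_plus _ (fun y => _ * _) (fun y => _ * _)); apply (lim_cmul _ (fun y => _)).
  - unfold EE. apply exp_sq_lim_p. nra.
  - eapply filterlim_comp; [apply (shift_p mu) | exact HL].
Qed.

Lemma E_U_val mu sigma rho Lp Lm L2 z : 0 < sigma -> -1 < rho < 1 ->
  filterlim (Phi (DD sigma rho)) (Rbar_locally p_infty) (locally Lp) ->
  filterlim (Phi (DD sigma rho)) (Rbar_locally m_infty) (locally Lm) ->
  filterlim (Phi (2 * sigma ^ 2)) (Rbar_locally p_infty) (locally L2) ->
  E_sum_U_gt mu sigma rho z =
    Cst sigma rho * (Lp - Lm) * ((1 + rho) * (- sigma ^ 2) * 0 + 2 * mu * L2) - QQ mu sigma rho (Lp - Lm) z.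
Proof.
  intros Hs Hr HLp HLm HL2. unfold E_sum_U_gt.
  replace (fun x => RInt_gen (fun y => (x + y) * binorm_density mu sigma rho x y)
                       (Rbar_locally m_infty) (Rbar_locally p_infty)) with (gg mu sigma rho (Lp - Lm)).
  2:{ apply functional_extensionality. intros x. symmetry. apply is_RInt_gen_unique.
      apply inner; auto. }
  apply is_RInt_gen_unique. apply (RIg_deriv _ _ (QQ mu sigma rho (Lp - Lm))).
  - intros; apply QQ_deriv; auto.
  - apply gg_cont.
  - apply at_point_lim.
  - apply QQ_lim; auto.
Qed.

Lemma E_V_val mu sigma rho Lp Lm L2 z : 0 < sigma -> -1 < rho < 1 ->
  filterlim (Phi (DD sigma rho)) (Rbar_locally p_infty) (locally Lp) ->
  filterlim (Phi (DD sigma rho)) (Rbar_locally m_infty) (locally Lm) ->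
  filterlim (Phi (2 * sigma ^ 2)) (Rbar_locally p_infty) (locally L2) ->
  E_sum_V_gt mu sigma rho z =
    Cst sigma rho * (Lp - Lm) * ((1 + rho) * (- sigma ^ 2) * 0 + 2 * mu * L2) - QQ mu sigma rho (Lp - Lm) z.
Proof.
  intros Hs Hr HLp HLm HL2. rewrite <- (E_U_val mu sigma rho Lp Lm L2 z) by auto.
  unfold E_sum_V_gt, E_sum_U_gt. f_equal. apply functional_extensionality. intros x. f_equal.
  apply functional_extensionality. intros y. rewrite dens_sym. f_equal. ring.
Qed.

Lemma RInt_zero a b : RInt (fun _ => 0) a b = 0.
Proof. rewrite RInt_const. apply Rmult_0_r. Qed.

Theorem proposition2 (pu pv mu sigma rho : R) :
  0 <= pu -> 0 <= pv -> pu + pv = 1 ->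
  mu < 0 -> 0 < sigma -> -1 < rho < 1 ->
  (exists l, is_derive (perf pu pv mu sigma rho) 0 l /\ 0 < l) /\
  (forall z, perf pu pv mu sigma rho z <= perf pu pv mu sigma rho ((rho - 1) / (rho + 1) * mu)) /\
  0 < perf pu pv mu sigma rho ((rho - 1) / (rho + 1) * mu).
Proof.
  intros Hpu Hpv Hp Hmu Hs Hr.
  destruct (gauss (DD sigma rho) (DD_pos sigma rho Hs Hr)) as [Lp [Lm [HLp [HLm Hlt]]]].
  destruct (gauss (2 * sigma ^ 2)) as [L2 [_ [HL2 _]]]. { nra. }
  set (I0 := Lp - Lm). assert (HI0 : 0 < I0) by (unfold I0; lra).
  set (Qinf := Cst sigma rho * I0 * ((1 + rho) * (- sigma ^ 2) * 0 + 2 * mu * L2)).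
  set (Q := QQ mu sigma rho I0). set (g := gg mu sigma rho I0).
  assert (Hperf : forall z, perf pu pv mu sigma rho z = Qinf - Q z).
  { intros z. unfold perf. rewrite (E_U_val mu sigma rho Lp Lm L2 z), (E_V_val mu sigma rho Lp Lm L2 z) by auto.
    fold I0. fold Qinf. fold Q. replace pv with (1 - pu) by lra. ring. }
  assert (Hex : forall a b, ex_RInt g a b).
  { intros. apply (@ex_RInt_continuous R_CompleteNormedModule). intros; apply gg_cont. }
  assert (Hdiff : forall a b, Q b - Q a = RInt g a b).
  { intros a b. symmetry. apply is_RInt_unique.
    apply (is_RInt_derive Q g). intros; apply QQ_deriv; auto. intros; apply gg_cont. }
  assert (HC : 0 < Cst sigma rho).
  { unfold Cst. apply Rinv_0_lt_compat. pose proof PI_RGT_0.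
    assert (0 < sqrt (1 - rho ^ 2)) by (apply sqrt_lt_R0; nra). assert (0 < sigma ^ 2) by nra.
    apply Rmult_lt_0_compat; [|auto]. apply Rmult_lt_0_compat; [|auto]. lra. }
  set (zs := (rho - 1) / (rho + 1) * mu).
  assert (Hg : forall x, g x = (Cst sigma rho * EE mu sigma x * I0) * ((1 + rho) * (x - zs))).
  { intros x. unfold g, gg, mm, zs. field. lra. }
  assert (HK : forall x, 0 < Cst sigma rho * EE mu sigma x * I0).
  { intros x. unfold EE. pose proof (exp_pos (- (x - mu) ^ 2 / (2 * sigma ^ 2))).
    apply Rmult_lt_0_compat; auto. apply Rmult_lt_0_compat; auto. }
  split; [|split].
  - exists (- g 0). split.
    + apply is_derive_ext with (fun z => Qinf - Q z).
      { intros t. symmetry. apply Hperf. }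
      pose proof (is_derive_minus (fun _ : R => Qinf) Q 0 zero (g 0) (is_derive_const Qinf 0) (QQ_deriv mu sigma rho I0 0 Hs)) as H.
      assert (H2 : is_derive (fun z => Qinf - Q z) 0 (0 - g 0)) by exact H.
      replace (- g 0) with (0 - g 0) by ring. exact H2.
    + rewrite Hg. specialize (HK 0).
      assert ((1 + rho) * (0 - zs) = (1 - rho) * mu) by (unfold zs; field; lra).
      rewrite H. assert ((1 - rho) * mu < 0) by nra. nra.
  - intros z. rewrite !Hperf. fold zs.
    assert (Q zs <= Q z); [|lra].
    pose proof (Hdiff zs z).
    destruct (Rle_lt_dec zs z) as [Hz|Hz].
    + assert (0 <= RInt g zs z); [|lra].
      apply RInt_ge_0; auto. intros x Hx. rewrite Hg. specialize (HK x).
      apply Rmult_le_pos; [lra|]. apply Rmult_le_pos; lra.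
    + rewrite <- opp_RInt_swap in H by auto.
      assert (RInt g z zs <= 0); [|change (Q z - Q zs = - RInt g z zs) in H; lra].
      rewrite <- (RInt_zero z zs). apply RInt_le; auto. lra.
      apply (@ex_RInt_continuous R_CompleteNormedModule). intros; apply continuous_const.
      intros x Hx. rewrite Hg. specialize (HK x).
      assert ((1 + rho) * (x - zs) <= 0) by nra. nra.
  - rewrite Hperf. fold zs.
    assert (HA : 0 < RInt g zs (zs + 1)).
    { rewrite <- (RInt_zero zs (zs + 1)). apply RInt_lt. lra.
      intros; apply gg_cont. intros; apply continuous_const.
      intros x Hx. rewrite Hg. specialize (HK x).
      apply Rmult_lt_0_compat; auto. apply Rmult_lt_0_compat; lra. }
    assert (HB : Q (zs + 1) <= Qinf).
    { assert (Hle := is_lim_le_loc (fun _ => Q (zs + 1)) Q p_infty (Q (zs + 1)) Qinf).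
      simpl in Hle. apply Hle.
      - exists (zs + 1). intros x Hx. pose proof (Hdiff (zs + 1) x).
        assert (0 <= RInt g (zs + 1) x); [|lra].
        apply RInt_ge_0; auto. lra. intros y Hy. rewrite Hg. specialize (HK y).
        apply Rmult_le_pos; [lra|]. apply Rmult_le_pos; lra.
      - apply is_lim_const.
      - exact (QQ_lim mu sigma rho I0 L2 Hs HL2). }
    pose proof (Hdiff zs (zs + 1)). lra.
Qed.
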